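(* Let $V$ be a vertex operator algebra that is strongly generated by a single homogeneous element $u\in V$, i.e. $V$ is spanned by the vectors $u_{-k_1}u_{-k_2}\cdots u_{-k_r}\mathbf{1}$ with $r\in\mathbb{N}$ and $k_1,\dots,k_r\in\mathbb{Z}_+$. Let $n\in\mathbb{Z}_+$ and suppose that either (i) $1\le \mathrm{wt}\,u\le n$, or (ii) $\mathrm{wt}\,u=0$ and $u_{-2}\mathbf{1}\neq 0$. Then $O^L(V)\not\subset O_n^\circ(V)$.
   Context: $V$ has vacuum $\mathbf{1}$, vertex operator $Y(v,x)=\sum_{k\in\mathbb{Z}}v_kx^{-k-1}$, Virasoro operators $L(m)$, and $\mathrm{wt}\,v$ is the $L(0)$-eigenvalue of a homogeneous $v$. For $n\in\mathbb{N}$, homogeneous $a\in V$ and $b\in V$, $a\circ_n b=\mathrm{Res}_x\,(1+x)^{\mathrm{wt}\,a+n}Y(a,x)b\,x^{-2n-2}$ (extended linearly in $a$). $O_n^\circ(V)=\mathrm{span}\{a\circ_n b:a,b\in V\}$ and $O^L(V)=\{(L(-1)+L(0))v: v\in V\}$. *)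

(* Defs.v *)
From HB Require Import structures.
From mathcomp Require Import all_boot all_order all_algebra complex.
From mathcomp Require Import Rstruct.
Set Implicit Arguments. Unset Strict Implicit. Unset Printing Implicit Defensive.
Import Order.TTheory GRing.Theory Num.Theory.
Local Open Scope ring_scope.

Definition C : fieldType := (Rdefinitions.R)[i].

Section VOA.
Variable V : lmodType C.

Definition binomz (r : int) (i : nat) : C :=
  (\prod_(j < i) (r%:~R - j%:R)) / (i`!)%:R.

(* Y : V -> int -> V -> V,  Y u k v = u_k v  (Y(u,x) = sum_k u_k x^{-k-1}). *)
Variable Y : V -> int -> V -> V.

Definition Lop (omega : V) (m : int) : V -> V := Y omega (m + 1).

Definition in_span (S : V -> Prop) (v : V) : Prop :=
  exists s : seq (C * V), (forall p, p \in s -> S p.2) /\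
    v = \sum_(p <- s) p.1 *: p.2.

(* The axioms of a vertex operator algebra (V, Y, 1, omega) of central charge c
   (Frenkel–Lepowsky–Meurman / Lepowsky–Li), with the Jacobi identity written
   in its equivalent component (Borcherds) form. *)
Record is_VOA (vac omega : V) (c : C) : Prop := {
  Y_linl : forall (a : C) (u u' : V) (k : int) (w : V),
      Y (a *: u + u') k w = a *: Y u k w + Y u' k w;
  Y_linr : forall (u : V) (k : int) (a : C) (w w' : V),
      Y u k (a *: w + w') = a *: Y u k w + Y u k w';
  Y_trunc : forall u v : V, exists N : int, forall k : int, N <= k -> Y u k v = 0;
  Y_vac : forall (k : int) (v : V), Y vac k v = (if k == -1 then v else 0);
  Y_creation : forall u : V, Y u (-1) vac = u /\ (forall k : int, 0 <= k -> Y u k vac = 0);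
  Y_jacobi : forall (u v w : V) (m n l : int) (M : nat),
      (forall i : nat, (M <= i)%N ->
          [/\ Y u (l + i%:Z) v = 0, Y v (n + i%:Z) w = 0 & Y u (m + i%:Z) w = 0]) ->
      \sum_(i < M) binomz m i *: Y (Y u (l + i%:Z) v) (m + n - i%:Z) w =
      \sum_(i < M) ((-1) ^+ i * binomz l i) *:
          (Y u (m + l - i%:Z) (Y v (n + i%:Z) w)
           - (-1) ^ l *: Y v (n + l - i%:Z) (Y u (m + i%:Z) w));
  Y_virasoro : forall (m n : int) (v : V),
      Lop omega m (Lop omega n v) - Lop omega n (Lop omega m v) =
      (m - n)%:~R *: Lop omega (m + n) v
      + ((m ^+ 3 - m)%:~R / 12%:R * (if m + n == 0 then 1 else 0) * c) *: v;
  Y_deriv : forall (v : V) (k : int) (w : V),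
      Y (Lop omega (-1) v) k w = - (k%:~R) *: Y v (k - 1) w;
  Y_grading : forall v : V, exists s : seq (int * V),
      (forall p, p \in s -> Lop omega 0 p.2 = p.1%:~R *: p.2) /\
      v = \sum_(p <- s) p.2;
  Y_findim : forall n : int, exists s : seq V,
      forall v : V, Lop omega 0 v = n%:~R *: v -> in_span (fun x => x \in s) v;
  Y_lowbound : exists N : int, forall (n : int) (v : V),
      n < N -> Lop omega 0 v = n%:~R *: v -> v = 0
}.

Definition homogeneous (omega : V) (v : V) (w : int) : Prop :=
  Lop omega 0 v = w%:~R *: v.

(* a o_n b = Res_x (1+x)^{wt a + n} Y(a,x) b x^{-2n-2}
           = sum_{i >= 0} binom(wt a + n, i) a_{i-2n-2} b,
   for homogeneous a of weight wa; the sum is finite, M being any bound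
   beyond which a_{i-2n-2} b vanishes. *)
Definition circ_n (n : nat) (a : V) (wa : int) (b : V) (M : nat) : V :=
  \sum_(i < M) binomz (wa + n%:Z) i *: Y a (i%:Z - 2 * n%:Z - 2) b.

(* The set of all a o_n b (a homogeneous, b arbitrary); by linearity of o_n in
   a, its span is O_n^o(V) = span{ a o_n b : a, b in V }. *)
Definition circ_set (omega : V) (n : nat) (x : V) : Prop :=
  exists (a : V) (wa : int) (b : V) (M : nat),
    homogeneous omega a wa /\
    (forall i : nat, (M <= i)%N -> Y a (i%:Z - 2 * n%:Z - 2) b = 0) /\
    x = circ_n n a wa b M.

Definition On_circ (omega : V) (n : nat) : V -> Prop := in_span (circ_set omega n).

Definition OL (omega : V) (x : V) : Prop :=
  exists v : V, x = Lop omega (-1) v + Lop omega 0 v.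

(* Monomial u_{-k_1} u_{-k_2} ... u_{-k_r} 1 with k_j = ks_j + 1 (k_j in Z_+). *)
Definition monomial (vac u : V) (ks : seq nat) : V :=
  foldr (fun k w => Y u (- (k.+1)%:Z) w) vac ks.

Definition strongly_generated_by (vac u : V) : Prop :=
  forall v : V, in_span (fun x => exists ks, x = monomial vac u ks) v.

End VOA.

(* Main.v *)
Require Import Defs.
From HB Require Import structures.
From mathcomp Require Import all_boot all_order all_algebra complex zify Rstruct.
Import Order.TTheory GRing.Theory Num.Theory.
Local Open Scope ring_scope.
Set Implicit Arguments. Unset Strict Implicit.

Lemma intrC_eq0 (z : int) : ((z%:~R : C) == 0) = (z == 0).
Proof. exact: (@intr_eq0 (Rdefinitions.R)[i] z). Qed.

Lemma Yr0 (V : lmodType C) (Y : V -> int -> V -> V) vac omega c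
  (HV : is_VOA Y vac omega c) u k : Y u k 0 = 0.
Proof.
have := Y_linr HV u k 1 0 0; rewrite !scale1r addr0 => h.
by apply: (addrI (Y u k 0)); rewrite addr0 -h.
Qed.

Lemma Yl0 (V : lmodType C) (Y : V -> int -> V -> V) vac omega c
  (HV : is_VOA Y vac omega c) k w : Y 0 k w = 0.
Proof.
have := Y_linl HV 1 0 0 k w; rewrite !scale1r addr0 => h.
by apply: (addrI (Y 0 k w)); rewrite addr0 -h.
Qed.

Lemma Yr_add (V : lmodType C) (Y : V -> int -> V -> V) vac omega c
  (HV : is_VOA Y vac omega c) u k w w' : Y u k (w + w') = Y u k w + Y u k w'.
Proof. by have := Y_linr HV u k 1 w w'; rewrite !scale1r. Qed.

Lemma Yr_scale (V : lmodType C) (Y : V -> int -> V -> V) vac omega c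
  (HV : is_VOA Y vac omega c) u k a w : Y u k (a *: w) = a *: Y u k w.
Proof. by have := Y_linr HV u k a w 0; rewrite !addr0 (Yr0 HV) addr0. Qed.

Lemma Yl_scale (V : lmodType C) (Y : V -> int -> V -> V) vac omega c
  (HV : is_VOA Y vac omega c) a u k w : Y (a *: u) k w = a *: Y u k w.
Proof. by have := Y_linl HV a u 0 k w; rewrite !addr0 (Yl0 HV) addr0. Qed.

Lemma Yr_opp (V : lmodType C) (Y : V -> int -> V -> V) vac omega c
  (HV : is_VOA Y vac omega c) u k w : Y u k (- w) = - Y u k w.
Proof. by rewrite -scaleN1r (Yr_scale HV) scaleN1r. Qed.

Lemma Yr_sum (V : lmodType C) (Y : V -> int -> V -> V) vac omega c
  (HV : is_VOA Y vac omega c) u k (I : Type) (r : seq I) (F : I -> V) :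
  Y u k (\sum_(i <- r) F i) = \sum_(i <- r) Y u k (F i).
Proof.
elim: r => [|x r IH]; first by rewrite !big_nil (Yr0 HV).
by rewrite !big_cons (Yr_add HV) IH.
Qed.

Lemma binomz_N (r : int) (i : nat) : 0 <= r -> r < i%:Z -> binomz r i = 0.
Proof.
case: r => // N _ hN.
have hN' : (N < i)%N by lia.
rewrite /binomz (bigD1 (Ordinal hN')) //= subrr mul0r mul0r //.
Qed.

Lemma binomz0 (r : int) : binomz r 0 = 1.
Proof. by rewrite /binomz big_ord0 /= divr1. Qed.

Lemma binomz11 : binomz 1 1 = 1.
Proof. by rewrite /binomz big_ord1 /= subr0 divr1. Qed.

Lemma sum_drop2 (W : zmodType) M (F : nat -> W) : (2 <= M)%N ->
  (forall i, (2 <= i)%N -> F i = 0) -> \sum_(i < M) F i = F 0%N + F 1%N.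
Proof.
move=> hM hF; rewrite (_ : M = (M - 2).+2); last by lia.
by rewrite !big_ord_recl big1 ?addr0 // => i _; apply: hF.
Qed.

Lemma sum_drop1 (W : zmodType) M (F : nat -> W) : (1 <= M)%N ->
  (forall i, (1 <= i)%N -> F i = 0) -> \sum_(i < M) F i = F 0%N.
Proof.
move=> hM hF; rewrite (_ : M = (M - 1).+1); last by lia.
by rewrite !big_ord_recl big1 ?addr0 // => i _; apply: hF.
Qed.

Lemma L0_Y (V : lmodType C) (Y : V -> int -> V -> V) vac omega c
  (HV : is_VOA Y vac omega c) (a : V) wa (b : V) q j :
  homogeneous Y omega a wa -> homogeneous Y omega b q ->
  Lop Y omega 0 (Y a j b) = (wa + q - j - 1)%:~R *: Y a j b.
Proof.
move=> Ha Hb.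
have [N1 h1] := Y_trunc HV omega a.
have [N2 h2] := Y_trunc HV a b.
have [N3 h3] := Y_trunc HV omega b.
pose M := (`|N1| + `|N2 - j| + `|N3| + 2)%N.
have HM : forall i : nat, (M <= i)%N -> [/\ Y omega (0 + i%:Z) a = 0,
   Y a (j + i%:Z) b = 0 & Y omega (1 + i%:Z) b = 0].
  by move=> i hi; split; [apply: h1|apply: h2|apply: h3]; rewrite /M in hi; lia.
have J := Y_jacobi HV HM.
rewrite (sum_drop2 (F := fun i : nat => binomz 1 i *: Y (Y omega (0 + i%:Z) a) (1 + j - i%:Z) b)) in J; last 2 first.
- by rewrite /M; lia.
- by move=> i hi; rewrite binomz_N ?scale0r //; lia.
rewrite (sum_drop1 (F := fun i : nat => ((-1) ^+ i * binomz 0 i) *: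
          (Y omega (1 + 0 - i%:Z) (Y a (j + i%:Z) b)
           - (-1) ^ 0 *: Y a (j + 0 - i%:Z) (Y omega (1 + i%:Z) b)))) in J; last 2 first.
- by rewrite /M; lia.
- by move=> i hi; rewrite binomz_N ?mulr0 ?scale0r //; lia.
move: J; rewrite !binomz0 binomz11 expr0 mul1r expr0z !scale1r !subr0 ?addr0 ?add0r.

have hd : Y (Y omega 0 a) (1 + j) b = - (1 + j)%:~R *: Y a (1 + j - 1) b := Y_deriv HV a (1 + j) b.
have e1 : 1 + j - 1 = j by lia.
rewrite e1 in hd; rewrite e1 hd.
have ha : Y omega 1 a = wa%:~R *: a := Ha.
have hb : Y omega 1 b = q%:~R *: b := Hb.
rewrite ha hb (Yl_scale HV) (Yr_scale HV).
change (Y omega 1 (Y a j b)) with (Lop Y omega 0 (Y a j b)).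
move=> J.
have -> : Lop Y omega 0 (Y a j b) = (Lop Y omega 0 (Y a j b) - q%:~R *: Y a j b) + q%:~R *: Y a j b by rewrite subrK.
rewrite -J -!scalerDl; congr (_ *: _).
rewrite -intrN -!intrD; congr (_%:~R); lia.
Qed.

Fixpoint PK (V : lmodType C) (Y : V -> int -> V -> V) (omega : V) (K : seq int) (v : V) : V :=
  if K is k :: K' then Lop Y omega 0 (PK Y omega K' v) - k%:~R *: PK Y omega K' v else v.


Lemma L0_add (V : lmodType C) (Y : V -> int -> V -> V) vac omega c
  (HV : is_VOA Y vac omega c) v w : Lop Y omega 0 (v + w) = Lop Y omega 0 v + Lop Y omega 0 w.
Proof. exact: (Yr_add HV). Qed.
Lemma L0_scale (V : lmodType C) (Y : V -> int -> V -> V) vac omega c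
  (HV : is_VOA Y vac omega c) a v : Lop Y omega 0 (a *: v) = a *: Lop Y omega 0 v.
Proof. exact: (Yr_scale HV). Qed.
Lemma L0_0 (V : lmodType C) (Y : V -> int -> V -> V) vac omega c
  (HV : is_VOA Y vac omega c) : Lop Y omega 0 0 = 0.
Proof. exact: (Yr0 HV). Qed.

Lemma L0_opp (V : lmodType C) (Y : V -> int -> V -> V) vac omega c
  (HV : is_VOA Y vac omega c) v : Lop Y omega 0 (- v) = - Lop Y omega 0 v.
Proof. exact: (Yr_opp HV). Qed.

Lemma PK_add (V : lmodType C) (Y : V -> int -> V -> V) vac omega c
  (HV : is_VOA Y vac omega c) K v w : PK Y omega K (v + w) = PK Y omega K v + PK Y omega K w.
Proof.
elim: K => [//|k K IH] /=.
by rewrite IH (L0_add HV) scalerDr opprD addrACA.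
Qed.

Lemma PK_scale (V : lmodType C) (Y : V -> int -> V -> V) vac omega c
  (HV : is_VOA Y vac omega c) K a v : PK Y omega K (a *: v) = a *: PK Y omega K v.
Proof.
elim: K => [//|k K IH] /=.
by rewrite IH (L0_scale HV) scalerBr !scalerA mulrC.
Qed.

Lemma PK_0 (V : lmodType C) (Y : V -> int -> V -> V) vac omega c
  (HV : is_VOA Y vac omega c) K : PK Y omega K 0 = 0.
Proof. by have := PK_scale HV K 0 0; rewrite !scale0r. Qed.

Lemma PK_opp (V : lmodType C) (Y : V -> int -> V -> V) vac omega c
  (HV : is_VOA Y vac omega c) K v : PK Y omega K (- v) = - PK Y omega K v.
Proof. by rewrite -scaleN1r (PK_scale HV) scaleN1r. Qed.

Lemma PK_L0 (V : lmodType C) (Y : V -> int -> V -> V) vac omega c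
  (HV : is_VOA Y vac omega c) K v :
  PK Y omega K (Lop Y omega 0 v) = Lop Y omega 0 (PK Y omega K v).
Proof.
elim: K => [//|k K IH] /=.
by rewrite IH (L0_add HV) (L0_opp HV) (L0_scale HV).
Qed.

Lemma PK_comm (V : lmodType C) (Y : V -> int -> V -> V) vac omega c
  (HV : is_VOA Y vac omega c) K1 K2 v :
  PK Y omega K1 (PK Y omega K2 v) = PK Y omega K2 (PK Y omega K1 v).
Proof.
elim: K1 => [//|k K IH] /=.
by rewrite IH (PK_add HV) (PK_opp HV) (PK_scale HV) (PK_L0 HV).
Qed.

Lemma PK_eig (V : lmodType C) (Y : V -> int -> V -> V) vac omega c
  (HV : is_VOA Y vac omega c) K v q : homogeneous Y omega v q ->
  PK Y omega K v = (\prod_(k <- K) ((q - k)%:~R : C)) *: v.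
Proof.
move=> Hv; elim: K => [|k K IH] /=; first by rewrite big_nil scale1r.
rewrite IH big_cons (L0_scale HV) Hv !scalerA -scalerBl; congr (_ *: _).
by rewrite intrB mulrBl mulrC.
Qed.

Definition goodP (V : lmodType C) (Y : V -> int -> V -> V) (omega : V) (P : int -> Prop) (v : V) :=
  exists K : seq int, (forall k, k \in K -> P k) /\ PK Y omega K v = 0.

Lemma good0 (V : lmodType C) (Y : V -> int -> V -> V) omega P : goodP Y omega P 0.
Proof. by exists [::]. Qed.

Lemma good_add (V : lmodType C) (Y : V -> int -> V -> V) vac omega c
  (HV : is_VOA Y vac omega c) P v w :
  goodP Y omega P v -> goodP Y omega P w -> goodP Y omega P (v + w).
Proof.
move=> [K1 [h1 e1]] [K2 [h2 e2]]; exists (K1 ++ K2); split.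
  by move=> k; rewrite mem_cat => /orP [/h1|/h2].
have cat : forall K K' x, PK Y omega (K ++ K') x = PK Y omega K (PK Y omega K' x).
  by elim=> [//|k K IH] K' x /=; rewrite IH.
by rewrite cat !(PK_add HV) e2 (PK_comm HV) e1 !(PK_0 HV) addr0.
Qed.

Lemma good_scale (V : lmodType C) (Y : V -> int -> V -> V) vac omega c
  (HV : is_VOA Y vac omega c) P a v : goodP Y omega P v -> goodP Y omega P (a *: v).
Proof. by move=> [K [h e]]; exists K; split=> //; rewrite (PK_scale HV) e scaler0. Qed.

Lemma good_sum (V : lmodType C) (Y : V -> int -> V -> V) vac omega c
  (HV : is_VOA Y vac omega c) P (I : eqType) (r : seq I) (F : I -> V) :
  (forall i, i \in r -> goodP Y omega P (F i)) -> goodP Y omega P (\sum_(i <- r) F i).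
Proof.
elim: r => [|x r IH] h; first by rewrite big_nil; apply: good0.
rewrite big_cons; apply: (good_add HV); first by apply: h; rewrite mem_head.
by apply: IH => i hi; apply: h; rewrite inE hi orbT.
Qed.

Lemma good_span (V : lmodType C) (Y : V -> int -> V -> V) vac omega c
  (HV : is_VOA Y vac omega c) P (S : V -> Prop) v :
  (forall x, S x -> goodP Y omega P x) -> in_span S v -> goodP Y omega P v.
Proof.
move=> hS [s [hs ->]]; apply: (good_sum HV) => p hp.
by apply: (good_scale HV); apply: hS; apply: hs.
Qed.

Lemma good_eig (V : lmodType C) (Y : V -> int -> V -> V) vac omega c
  (HV : is_VOA Y vac omega c) (P : int -> Prop) v q :
  homogeneous Y omega v q -> P q -> goodP Y omega P v.
Proof.
move=> Hv Pq; exists [:: q]; split; first by move=> k; rewrite inE => /eqP ->.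
by rewrite /= Hv subrr.
Qed.

Lemma hom_scale (V : lmodType C) (Y : V -> int -> V -> V) vac omega c
  (HV : is_VOA Y vac omega c) a v q :
  homogeneous Y omega v q -> homogeneous Y omega (a *: v) q.
Proof. by rewrite /homogeneous (L0_scale HV) => ->; rewrite !scalerA mulrC. Qed.

Lemma vac_hom (V : lmodType C) (Y : V -> int -> V -> V) vac omega c
  (HV : is_VOA Y vac omega c) : homogeneous Y omega vac 0.
Proof.
by rewrite /homogeneous scale0r; apply: (proj2 (Y_creation HV omega)).
Qed.

Lemma mon_hom (V : lmodType C) (Y : V -> int -> V -> V) vac omega c
  (HV : is_VOA Y vac omega c) u wu : homogeneous Y omega u wu -> 0 <= wu ->
  forall ks, exists q, 0 <= q /\ homogeneous Y omega (monomial Y vac u ks) q.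
Proof.
move=> Hu wu0; elim=> [|k ks [q [q0 Hq]]]; first by exists 0; split=> //; apply: (vac_hom HV).
exists (wu + q - (- (k.+1)%:Z) - 1); split; first by lia.
exact: (L0_Y HV _ Hu Hq).
Qed.

Lemma nonneg (V : lmodType C) (Y : V -> int -> V -> V) vac omega c
  (HV : is_VOA Y vac omega c) u wu : homogeneous Y omega u wu -> 0 <= wu ->
  strongly_generated_by Y vac u ->
  forall v q, homogeneous Y omega v q -> q < 0 -> v = 0.
Proof.
move=> Hu wu0 Hgen v q Hv q0.
have [K [hK e]] : goodP Y omega (fun k => 0 <= k) v.
  apply: (good_span HV) (Hgen v) => x [ks ->].
  have [q' [q'0 Hq']] := mon_hom HV Hu wu0 ks.
  exact: (good_eig HV Hq').
have hne : \prod_(k <- K) ((q - k)%:~R : C) != 0.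
  rewrite prodf_seq_neq0; apply/allP => k hk /=; rewrite intrC_eq0; have := hK k hk; lia.
by move: e; rewrite (PK_eig HV _ Hv) => /eqP; rewrite scaler_eq0 (negbTE hne) /= => /eqP.
Qed.

Lemma circ_good (V : lmodType C) (Y : V -> int -> V -> V) vac omega c
  (HV : is_VOA Y vac omega c) u wu : homogeneous Y omega u wu -> 0 <= wu ->
  strongly_generated_by Y vac u -> forall (n : nat) x,
  On_circ Y omega n x -> goodP Y omega (fun k => n.+1%:Z <= k) x.
Proof.
move=> Hu wu0 Hgen n x; apply: (good_span HV).
move=> _ [a [wa [b [M [Ha [_ ->]]]]]].
have [s [hs ->]] := Y_grading HV b.
rewrite /circ_n; apply: (good_sum HV) => i _.
rewrite (Yr_sum HV) scaler_sumr; apply: (good_sum HV) => p hp.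
case: (eqVneq a 0) => [->|a0]; first by rewrite (Yl0 HV) scaler0; apply: good0.
have wa0 : 0 <= wa.
  rewrite leNgt; apply/negP => /(nonneg HV Hu wu0 Hgen Ha) /eqP.
  by rewrite (negbTE a0).
case: (eqVneq p.2 0) => [->|p0]; first by rewrite (Yr0 HV) scaler0; apply: good0.
have Hp : homogeneous Y omega p.2 p.1 := hs p hp.
have p10 : 0 <= p.1.
  rewrite leNgt; apply/negP => /(nonneg HV Hu wu0 Hgen Hp) /eqP.
  by rewrite (negbTE p0).
case: (leP (i%:Z) (wa + n%:Z)) => hi.
- apply: (good_eig HV (q := wa + p.1 - (i%:Z - 2 * n%:Z - 2) - 1)).
    by apply: (hom_scale HV); apply: (L0_Y HV _ Ha Hp).
  lia.
- by rewrite binomz_N ?scale0r; [apply: good0 | lia | lia].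
Qed.

Unset Implicit Arguments.

Theorem theorem4p1 (V : lmodType C) (Y : V -> int -> V -> V)
    (vac omega : V) (c : C) (HV : is_VOA Y vac omega c)
    (u : V) (wu : int) (Hu0 : u != 0) (Hu : homogeneous Y omega u wu)
    (Hgen : strongly_generated_by Y vac u)
    (n : nat) (Hn : (0 < n)%N)
    (Hcase : (1 <= wu /\ wu <= n%:Z) \/ (wu = 0 /\ Y u (-2) vac != 0)) :
  ~ (forall x : V, OL Y omega x -> On_circ Y omega n x).
Proof.
move=> H.
have wu0 : 0 <= wu by case: Hcase => [[h _]|[-> _]] //; lia.
have hvac := vac_hom HV.
have hL : Lop Y omega (-1) u = Y u (-2) vac.
  have := Y_deriv HV u (-1) vac; rewrite (proj1 (Y_creation HV _)) => ->.
  have -> : (-1 - 1 : int) = -2 by [].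
  have -> : (- (-1)%:~R : C) = 1 by rewrite ?intrN ?mulrNz opprK.
  by rewrite scale1r.
have hy : homogeneous Y omega (Y u (-2) vac) (wu + 1).
  have := L0_Y HV (-2) Hu hvac; rewrite /homogeneous.
  by move=> ->; congr (_%:~R *: _); rewrite addr0 -addrA.
have hz : homogeneous Y omega (wu%:~R *: u) wu by apply: (hom_scale HV).
have [K [hK hP]] := circ_good HV Hu wu0 Hgen (H _ (ex_intro _ u erefl)).
rewrite hL Hu in hP.
case: Hcase => [[w1 wn]|[w0 hy0]].
- have h2 : PK Y omega ((wu + 1) :: K) (Y u (-2) vac + wu%:~R *: u) = 0.
    by rewrite /= hP (L0_0 HV) scaler0 subr0.
  move: h2; rewrite (PK_add HV) (PK_eig HV _ hy) (PK_eig HV _ hz) big_cons subrr mul0r scale0r add0r.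
  have hne : ((wu - (wu + 1))%:~R * \prod_(k <- K) ((wu - k)%:~R : C)) != 0.
    apply: mulf_neq0; first by rewrite intrC_eq0; lia.
    rewrite prodf_seq_neq0; apply/allP => k hk /=; rewrite intrC_eq0; have := hK k hk; lia.
  move/eqP; rewrite big_cons scaler_eq0 (negbTE hne) /= scaler_eq0 intrC_eq0 (negbTE Hu0) orbF.
  by move/eqP; lia.
- subst wu; move: hP; rewrite scale0r addr0 (PK_eig HV _ hy) => /eqP.
  have hne : \prod_(k <- K) (((0 + 1) - k)%:~R : C) != 0.
    rewrite prodf_seq_neq0; apply/allP => k hk /=; rewrite intrC_eq0; have := hK k hk; lia.
  by rewrite scaler_eq0 (negbTE hne) /= (negbTE hy0).
Qed.
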